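(* (Homomorphism Theorem) Let $\mathbf L_1=(L_1,\vee,\wedge)$ and $\mathbf L_2=(L_2,\vee,\wedge)$ be partial lattices and $h$ a closed homomorphism from $\mathbf L_1$ to $\mathbf L_2$. Then $\ker h\in\operatorname{Con}\mathbf L_1$. If, in addition, $[0_{\mathbf L_1^*}]\Theta(\ker h)=\{0_{\mathbf L_1^*}\}$ provided $0_{\mathbf L_1^*}\in L_1^*$, and $[1_{\mathbf L_1^*}]\Theta(\ker h)=\{1_{\mathbf L_1^*}\}$ provided $1_{\mathbf L_1^*}\in L_1^*$, then $(h(L_1),\vee,\wedge)$, with partial operations as in $\mathbf L_2$ (i.e. $h(a)\vee h(b)$ is defined iff it is defined in $\mathbf L_2$, with the same value, and likewise for $\wedge$), is a partial lattice isomorphic to $\mathbf L_1/(\ker h)$, via $h(x)\mapsto[x]\ker h$.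
   Context: A partial lattice is a set $L$ with two partial binary operations $\vee,\wedge$ satisfying strong idempotency, commutativity and associativity (for every assignment, one side is defined iff the other is, and then they are equal) and the duality conditions: if $a\vee b$ is defined and equals $a$ then $a\wedge b$ is defined and equals $b$, and dually. Its induced order is $x\leq y$ iff $x\vee y$ is defined and equals $y$. The two-point extension $\mathbf L^*=(L^*,\leq^* )$, with new elements $0_{\mathbf L^*},1_{\mathbf L^*}\notin L$: $L^*$ is $L$ together with a new top element $1_{\mathbf L^*}$ if $\vee$ is not everywhere defined and a new bottom element $0_{\mathbf L^*}$ if $\wedge$ is not everywhere defined; $\leq^*$ extends $\leq$ by putting the new bottom below and the new top above all elements; it is a lattice with operations $\vee^*=\sup_{\leq^*}$, $\wedge^*=\inf_{\leq^*}$. A congruence on $\mathbf L$ is an equivalence relation $E$ on $L$ with $\Theta(E)\cap L^2=E$, where $\Theta(E)$ is the lattice congruence on $\mathbf L^*$ generated by $E$; $\operatorname{Con}\mathbf L$ is the set of these. For $E\in\operatorname{Con}\mathbf L$, $\mathbf L/E=(L/E,\vee,\wedge)$ with $[x]E\vee[y]E:=[x\vee^*y]\Theta(E)\cap L$ if this set is non-empty, undefined otherwise, and dually for $\wedge$. A homomorphism of partial algebras is a map $h$ such that whenever $f(a_1,\dots,a_n)$ is defined, $f(h(a_1),\dots,h(a_n))$ is defined and equals $h(f(a_1,\dots,a_n))$; it is closed if additionally definedness of $f(h(a_1),\dots,h(a_n))$ implies definedness of $f(a_1,\dots,a_n)$. An isomorphism is a bijective closed homomorphism. $\ker h=\{(x,y):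 h(x)=h(y)\}$. *)

(* Defs.v *)
From Stdlib Require Import ClassicalEpsilon.



Definition pop (T : Type) := T -> T -> option T.

Definition obind {A B : Type} (f : A -> option B) (o : option A) : option B :=
  match o with Some a => f a | None => None end.

(* Strong idempotency, commutativity, associativity
   ("one side defined iff the other is, and then equal"). *)
Definition s_idem {T} (f : pop T) := forall a, f a a = Some a.
Definition s_comm {T} (f : pop T) := forall a b, f a b = f b a.
Definition s_assoc {T} (f : pop T) :=
  forall a b c, obind (fun d => f d c) (f a b) = obind (fun d => f a d) (f b c).

Definition is_partial_lattice {T} (j m : pop T) : Prop :=
  s_idem j /\ s_idem m /\ s_comm j /\ s_comm m /\ s_assoc j /\ s_assoc m /\
  (forall a b, j a b = Some a -> m a b = Some b) /\
  (forall a b, m a b = Some a -> j a b = Some b).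

Definition total {T} (f : pop T) := forall a b, exists c, f a b = Some c.

(* Two-point extension L^* : carrier elements of ext T that satisfy inLs. *)
Inductive ext (T : Type) := Bot | Elt (x : T) | Top.
Arguments Bot {T}.
Arguments Top {T}.
Arguments Elt {T} x.

Definition inLs {T} (j m : pop T) (u : ext T) : Prop :=
  match u with
  | Bot => ~ total m
  | Elt _ => True
  | Top => ~ total j
  end.

Definition leS {T} (j : pop T) (u v : ext T) : Prop :=
  match u, v with
  | Bot, _ => True
  | _, Top => True
  | Elt x, Elt y => j x y = Some y
  | _, _ => False
  end.

Definition is_sup {T} (j m : pop T) (a b s : ext T) : Prop :=
  inLs j m s /\ leS j a s /\ leS j b s /\
  forall u, inLs j m u -> leS j a u -> leS j b u -> leS j s u.

Definition is_inf {T} (j m : pop T) (a b s : ext T) : Prop :=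
  inLs j m s /\ leS j s a /\ leS j s b /\
  forall u, inLs j m u -> leS j u a -> leS j u b -> leS j u s.

Definition lcong {T} (j m : pop T) (R : ext T -> ext T -> Prop) : Prop :=
  (forall u v, R u v -> inLs j m u /\ inLs j m v) /\
  (forall u, inLs j m u -> R u u) /\
  (forall u v, R u v -> R v u) /\
  (forall u v w, R u v -> R v w -> R u w) /\
  (forall a b c d s t, inLs j m a -> inLs j m b -> inLs j m c -> inLs j m d ->
     R a b -> R c d -> is_sup j m a c s -> is_sup j m b d t -> R s t) /\
  (forall a b c d s t, inLs j m a -> inLs j m b -> inLs j m c -> inLs j m d ->
     R a b -> R c d -> is_inf j m a c s -> is_inf j m b d t -> R s t).

Definition Theta {T} (j m : pop T) (E : T -> T -> Prop) (u v : ext T) : Prop :=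
  forall R, lcong j m R -> (forall x y, E x y -> R (Elt x) (Elt y)) -> R u v.

Definition equivalence {T} (E : T -> T -> Prop) : Prop :=
  (forall x, E x x) /\ (forall x y, E x y -> E y x) /\
  (forall x y z, E x y -> E y z -> E x z).

Definition is_con {T} (j m : pop T) (E : T -> T -> Prop) : Prop :=
  equivalence E /\ forall x y, Theta j m E (Elt x) (Elt y) <-> E x y.

Definition qT {T} (E : T -> T -> Prop) := {A : T -> Prop | exists x, A = E x}.

Definition qclass {T} (E : T -> T -> Prop) (x : T) : qT E :=
  exist _ (E x) (ex_intro _ x eq_refl).

Definition qrep {T} {E : T -> T -> Prop} (A : qT E) : T :=
  proj1_sig (constructive_indefinite_description _ (proj2_sig A)).

(* [x]E v [y]E := [x v* y]Theta(E) cap L if non-empty (then it is the E-class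
   of any of its elements), undefined otherwise; dually for meet. *)
Definition qop {T} (j m : pop T) (E : T -> T -> Prop)
  (isx : pop T -> pop T -> ext T -> ext T -> ext T -> Prop) : pop (qT E) :=
  fun A B =>
    let C := fun z => exists s, isx j m (Elt (qrep A)) (Elt (qrep B)) s
                               /\ Theta j m E s (Elt z) in
    match excluded_middle_informative (exists z, C z) with
    | left H => Some (qclass E (proj1_sig (constructive_indefinite_description _ H)))
    | right _ => None
    end.

Definition qjoin {T} (j m : pop T) (E : T -> T -> Prop) : pop (qT E) :=
  qop j m E (fun j m => is_sup j m).
Definition qmeet {T} (j m : pop T) (E : T -> T -> Prop) : pop (qT E) :=
  qop j m E (fun j m => is_inf j m).

Definition is_hom {T1 T2} (j1 m1 : pop T1) (j2 m2 : pop T2) (h : T1 -> T2) :=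
  (forall a b c, j1 a b = Some c -> j2 (h a) (h b) = Some (h c)) /\
  (forall a b c, m1 a b = Some c -> m2 (h a) (h b) = Some (h c)).

Definition is_closed_hom {T1 T2} (j1 m1 : pop T1) (j2 m2 : pop T2) (h : T1 -> T2) :=
  is_hom j1 m1 j2 m2 h /\
  (forall a b, j2 (h a) (h b) <> None -> j1 a b <> None) /\
  (forall a b, m2 (h a) (h b) <> None -> m1 a b <> None).

Definition bijective {A B} (f : A -> B) :=
  (forall x y, f x = f y -> x = y) /\ (forall y, exists x, f x = y).

Definition is_iso {T1 T2} (j1 m1 : pop T1) (j2 m2 : pop T2) (h : T1 -> T2) :=
  bijective h /\ is_closed_hom j1 m1 j2 m2 h.

Definition ker {T1 T2} (h : T1 -> T2) : T1 -> T1 -> Prop := fun x y => h x = h y.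

Definition img {T1 T2} (h : T1 -> T2) := {y : T2 | exists x, h x = y}.

Definition iop {T1 T2} (h : T1 -> T2) (f : pop T2) : pop (img h) :=
  fun a b =>
    match f (proj1_sig a) (proj1_sig b) with
    | Some c =>
        match excluded_middle_informative (exists x, h x = c) with
        | left H => Some (exist _ c H)
        | right _ => None
        end
    | None => None
    end.

(* Main.v *)
Require Import Defs.
From Stdlib Require Import ProofIrrelevance ClassicalEpsilon.

Lemma jl_l T (j m : pop T) : is_partial_lattice j m ->
  forall x y z, j x y = Some z -> j x z = Some z.
Proof. intros (Ij&Im&Cj&Cm&Aj&Am&D1&D2) x y z H.
  pose proof (Aj x x y) as A. rewrite (Ij x) in A. simpl in A. rewrite H in A.
  simpl in A. rewrite <- A. reflexivity. Qed.

Lemma jl_r T (j m : pop T) : is_partial_lattice j m ->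
  forall x y z, j x y = Some z -> j y z = Some z.
Proof. intros PL x y z H. pose proof PL as (Ij&Im&Cj&Cm&_).
  rewrite Cj in H. exact (jl_l _ _ _ PL _ _ _ H). Qed.

Lemma jlub T (j m : pop T) : is_partial_lattice j m ->
  forall x y z w, j x y = Some z -> j x w = Some w -> j y w = Some w -> j z w = Some w.
Proof. intros (Ij&Im&Cj&Cm&Aj&Am&D1&D2) x y z w H1 H2 H3.
  pose proof (Aj x y w) as A. rewrite H1, H3 in A. simpl in A. rewrite A. exact H2. Qed.

Lemma jund T (j m : pop T) : is_partial_lattice j m ->
  forall x y w, j x y = None -> j x w = Some w -> j y w = Some w -> False.
Proof. intros (Ij&Im&Cj&Cm&Aj&Am&D1&D2) x y w H1 H2 H3.
  pose proof (Aj x y w) as A. rewrite H1, H3 in A. simpl in A. congruence. Qed.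

Lemma jm T (j m : pop T) : is_partial_lattice j m ->
  forall w x, j w x = Some x -> m w x = Some w.
Proof. intros (Ij&Im&Cj&Cm&Aj&Am&D1&D2) w x H.
  rewrite Cj in H. apply D1 in H. rewrite Cm. exact H. Qed.

Lemma ml_l T (j m : pop T) : is_partial_lattice j m ->
  forall x y z, m x y = Some z -> j z x = Some x.
Proof. intros (Ij&Im&Cj&Cm&Aj&Am&D1&D2) x y z H.
  pose proof (Am x x y) as A. rewrite (Im x) in A. simpl in A. rewrite H in A.
  simpl in A. apply D2. rewrite Cm. rewrite <- A. reflexivity. Qed.

Lemma ml_r T (j m : pop T) : is_partial_lattice j m ->
  forall x y z, m x y = Some z -> j z y = Some y.
Proof. intros PL x y z H. pose proof PL as (Ij&Im&Cj&Cm&_).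
  rewrite Cm in H. exact (ml_l _ _ _ PL _ _ _ H). Qed.

Lemma mglb T (j m : pop T) : is_partial_lattice j m ->
  forall x y z w, m x y = Some z -> j w x = Some x -> j w y = Some y -> j w z = Some z.
Proof. intros PL x y z w H1 H2 H3.
  pose proof PL as (Ij&Im&Cj&Cm&Aj&Am&D1&D2).
  apply (jm _ _ _ PL) in H2. apply (jm _ _ _ PL) in H3.
  pose proof (Am w x y) as A. rewrite H1, H2 in A. simpl in A. rewrite H3 in A.
  apply D2. congruence. Qed.

Lemma mund T (j m : pop T) : is_partial_lattice j m ->
  forall x y w, m x y = None -> j w x = Some x -> j w y = Some y -> False.
Proof. intros PL x y w H1 H2 H3.
  pose proof PL as (Ij&Im&Cj&Cm&Aj&Am&D1&D2).
  apply (jm _ _ _ PL) in H2. apply (jm _ _ _ PL) in H3.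
  pose proof (Am w x y) as A. rewrite H1, H2 in A. simpl in A. congruence. Qed.

Lemma leS_refl T (j m : pop T) : is_partial_lattice j m -> forall u, leS j u u.
Proof. intros (Ij&_) u. destruct u; simpl; auto. Qed.

Lemma leS_anti T (j m : pop T) : is_partial_lattice j m ->
  forall u v, leS j u v -> leS j v u -> u = v.
Proof. intros (Ij&Im&Cj&_) u v. destruct u, v; simpl; try tauto.
  intros H1 H2. rewrite Cj in H1. congruence. Qed.

Definition supE {T} (j : pop T) (a c : ext T) : ext T :=
  match a, c with
  | Bot, _ => c | Top, _ => Top | Elt _, Bot => a | Elt _, Top => Top
  | Elt x, Elt y => match j x y with Some z => Elt z | None => Top end end.

Definition infE {T} (m : pop T) (a c : ext T) : ext T :=
  match a, c with
  | Top, _ => c | Bot, _ => Bot | Elt _, Top => a | Elt _, Bot => Bot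
  | Elt x, Elt y => match m x y with Some z => Elt z | None => Bot end end.

Lemma sup_is_EE T (j m : pop T) : is_partial_lattice j m ->
  forall x y, is_sup j m (Elt x) (Elt y) (supE j (Elt x) (Elt y)).
Proof. intros PL x y. unfold is_sup, supE.
  destruct (j x y) eqn:E; simpl.
  - split; [exact I|]. split; [exact (jl_l _ _ _ PL _ _ _ E)|].
    split; [exact (jl_r _ _ _ PL _ _ _ E)|].
    intros u _ H1 H2. destruct u; simpl in *; auto.
    exact (jlub _ _ _ PL _ _ _ _ E H1 H2).
  - split; [intros Hc'; specialize (Hc' x y) as [c' Hc']; congruence|].
    split; [exact I|]. split; [exact I|].
    intros u _ H1 H2. destruct u; simpl in *; auto.
    exact (jund _ _ _ PL _ _ _ E H1 H2).
Qed.

Lemma sup_is T (j m : pop T) : is_partial_lattice j m ->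
  forall a c, inLs j m a -> inLs j m c -> is_sup j m a c (supE j a c).
Proof. intros PL a c Ha Hc. pose proof (leS_refl _ _ _ PL) as R.
  destruct a as [|x|], c as [|y|]; try apply sup_is_EE; auto; unfold is_sup; simpl;
  repeat split; auto; try (destruct u; simpl; tauto).
  all: try (intros u _ H1 H2; exact H2).
  all: try (intros u _ H1 H2; exact H1).
  all: exact (R (Elt _)).
Qed.

Lemma inf_is_EE T (j m : pop T) : is_partial_lattice j m ->
  forall x y, is_inf j m (Elt x) (Elt y) (infE m (Elt x) (Elt y)).
Proof. intros PL x y. unfold is_inf, infE.
  destruct (m x y) eqn:E; simpl.
  - split; [exact I|]. split; [exact (ml_l _ _ _ PL _ _ _ E)|].
    split; [exact (ml_r _ _ _ PL _ _ _ E)|].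
    intros u _ H1 H2. destruct u; simpl in *; auto.
    exact (mglb _ _ _ PL _ _ _ _ E H1 H2).
  - split; [intros Hc'; specialize (Hc' x y) as [c' Hc']; congruence|].
    split; [exact I|]. split; [exact I|].
    intros u _ H1 H2. destruct u; simpl in *; auto.
    exact (mund _ _ _ PL _ _ _ E H1 H2).
Qed.

Lemma inf_is T (j m : pop T) : is_partial_lattice j m ->
  forall a c, inLs j m a -> inLs j m c -> is_inf j m a c (infE m a c).
Proof. intros PL a c Ha Hc. pose proof (leS_refl _ _ _ PL) as R.
  destruct a as [|x|], c as [|y|]; try apply inf_is_EE; auto; unfold is_inf; simpl;
  repeat split; auto; try (destruct u; simpl; tauto).
  all: try (intros u _ H1 H2; exact H2).
  all: try (intros u _ H1 H2; exact H1).
  all: exact (R (Elt _)).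
Qed.

Lemma sup_eq T (j m : pop T) : is_partial_lattice j m ->
  forall a c s, inLs j m a -> inLs j m c -> is_sup j m a c s -> s = supE j a c.
Proof. intros PL a c s Ha Hc Hs. pose proof (sup_is _ _ _ PL a c Ha Hc) as Ht.
  destruct Hs as (Is&As&Cs&Ms), Ht as (It&At&Ct&Mt).
  apply (leS_anti _ _ _ PL); auto. Qed.

Lemma inf_eq T (j m : pop T) : is_partial_lattice j m ->
  forall a c s, inLs j m a -> inLs j m c -> is_inf j m a c s -> s = infE m a c.
Proof. intros PL a c s Ha Hc Hs. pose proof (inf_is _ _ _ PL a c Ha Hc) as Ht.
  destruct Hs as (Is&As&Cs&Ms), Ht as (It&At&Ct&Mt).
  apply (leS_anti _ _ _ PL); auto. Qed.

Definition Hx {T1 T2} (h : T1 -> T2) (u : ext T1) : ext T2 :=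
  match u with Bot => Bot | Elt x => Elt (h x) | Top => Top end.

Lemma H_sup T1 T2 (j1 m1 : pop T1) (j2 m2 : pop T2) h :
  is_closed_hom j1 m1 j2 m2 h ->
  forall a c, Hx h (supE j1 a c) = supE j2 (Hx h a) (Hx h c).
Proof. intros ((Hj&Hm)&Cj&Cm) a c.
  destruct a as [|x|], c as [|y|]; simpl; auto.
  destruct (j1 x y) eqn:E.
  - rewrite (Hj _ _ _ E). reflexivity.
  - destruct (j2 (h x) (h y)) eqn:E2; auto.
    exfalso. apply (Cj x y); congruence.
Qed.

Lemma H_inf T1 T2 (j1 m1 : pop T1) (j2 m2 : pop T2) h :
  is_closed_hom j1 m1 j2 m2 h ->
  forall a c, Hx h (infE m1 a c) = infE m2 (Hx h a) (Hx h c).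
Proof. intros ((Hj&Hm)&Cj&Cm) a c.
  destruct a as [|x|], c as [|y|]; simpl; auto.
  destruct (m1 x y) eqn:E.
  - rewrite (Hm _ _ _ E). reflexivity.
  - destruct (m2 (h x) (h y)) eqn:E2; auto.
    exfalso. apply (Cm x y); congruence.
Qed.

Definition Rk {T1 T2} (j1 m1 : pop T1) (h : T1 -> T2) (u v : ext T1) : Prop :=
  inLs j1 m1 u /\ inLs j1 m1 v /\ Hx h u = Hx h v.

Lemma Rk_cong T1 T2 (j1 m1 : pop T1) (j2 m2 : pop T2) h :
  is_partial_lattice j1 m1 -> is_closed_hom j1 m1 j2 m2 h -> lcong j1 m1 (Rk j1 m1 h).
Proof. intros PL CH. unfold lcong, Rk.
  split; [tauto|]. split; [tauto|]. split; [intros u v (?&?&?); auto|].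
  split; [intros u v w (?&?&?) (?&?&?); split; [|split]; congruence|].
  split.
  - intros a b c d s t Ia Ib Ic Id (_&_&E1) (_&_&E2) Hs Ht.
    pose proof Hs as (Is&_). pose proof Ht as (It&_).
    rewrite (sup_eq _ _ _ PL _ _ _ Ia Ic Hs), (sup_eq _ _ _ PL _ _ _ Ib Id Ht) in *.
    split; [|split]; auto.
    rewrite !(H_sup _ _ _ _ _ _ _ CH). congruence.
  - intros a b c d s t Ia Ib Ic Id (_&_&E1) (_&_&E2) Hs Ht.
    pose proof Hs as (Is&_). pose proof Ht as (It&_).
    rewrite (inf_eq _ _ _ PL _ _ _ Ia Ic Hs), (inf_eq _ _ _ PL _ _ _ Ib Id Ht) in *.
    split; [|split]; auto.
    rewrite !(H_inf _ _ _ _ _ _ _ CH). congruence.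
Qed.

Lemma Theta_Hx T1 T2 (j1 m1 : pop T1) (j2 m2 : pop T2) h :
  is_partial_lattice j1 m1 -> is_closed_hom j1 m1 j2 m2 h ->
  forall u v, Theta j1 m1 (ker h) u v -> Hx h u = Hx h v.
Proof. intros PL CH u v H. apply (H _ (Rk_cong _ _ _ _ _ _ _ PL CH)).
  intros x y E. unfold Rk; simpl; split; [exact I|split; [exact I|]]. congruence. Qed.

Lemma Theta_refl T (j m : pop T) E u : inLs j m u -> Theta j m E u u.
Proof. intros I R (_&Rr&_) _. auto. Qed.

Lemma ker_con T1 T2 (j1 m1 : pop T1) (j2 m2 : pop T2) h :
  is_partial_lattice j1 m1 -> is_closed_hom j1 m1 j2 m2 h -> is_con j1 m1 (ker h).
Proof. intros PL CH. split.
  - unfold equivalence, ker. split; [|split]; intros; congruence.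
  - intros x y. split.
    + intros H. apply (Theta_Hx _ _ _ _ _ _ _ PL CH) in H. simpl in H. congruence.
    + intros E R _ HR. apply HR. exact E.
Qed.

Lemma sig_eq {A} {P : A -> Prop} (a b : sig P) : proj1_sig a = proj1_sig b -> a = b.
Proof. destruct a as [a pa], b as [b pb]; simpl; intros ->. f_equal. apply proof_irrelevance. Qed.

Lemma qclass_eq T1 T2 (h : T1 -> T2) x y : h x = h y -> qclass (ker h) x = qclass (ker h) y.
Proof. intros H. apply sig_eq. simpl. unfold ker. rewrite H. reflexivity. Qed.

Lemma qrep_class T1 T2 (h : T1 -> T2) x : h (qrep (qclass (ker h) x)) = h x.
Proof. unfold qrep. destruct (constructive_indefinite_description _ _) as [r Hr]. simpl.
  simpl in Hr. unfold ker in Hr.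
  assert (K := f_equal (fun F => F x) Hr). simpl in K.
  assert (h r = h x) by (rewrite <- K; reflexivity). exact H. Qed.

Lemma iop_val T1 T2 (h : T1 -> T2) (f : pop T2) :
  (forall a b c, f (h a) (h b) = Some c -> exists x, h x = c) ->
  forall a b, option_map (@proj1_sig _ _) (iop h f a b) = f (proj1_sig a) (proj1_sig b).
Proof. intros Cl [ya [xa <-]] [yb [xb <-]]. unfold iop; simpl.
  destruct (f (h xa) (h xb)) eqn:E; auto.
  destruct (excluded_middle_informative _) as [H|H]; auto.
  exfalso; apply H. exact (Cl _ _ _ E). Qed.

Lemma omap_inj T1 T2 (h : T1 -> T2) (o1 o2 : option (img h)) :
  option_map (@proj1_sig _ _) o1 = option_map (@proj1_sig _ _) o2 -> o1 = o2.
Proof. destruct o1, o2; simpl; intros H; try discriminate; auto.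
  f_equal. apply sig_eq. congruence. Qed.

Lemma iop_pl T1 T2 (h : T1 -> T2) (j m : pop T2) :
  is_partial_lattice j m ->
  (forall a b c, j (h a) (h b) = Some c -> exists x, h x = c) ->
  (forall a b c, m (h a) (h b) = Some c -> exists x, h x = c) ->
  is_partial_lattice (iop h j) (iop h m).
Proof. intros (Ij&Im&Cj&Cm&Aj&Am&D1&D2) Clj Clm.
  pose proof (iop_val _ _ h j Clj) as Vj. pose proof (iop_val _ _ h m Clm) as Vm.
  assert (OB : forall f, (forall a b, option_map (@proj1_sig _ _) (iop h f a b) = f (proj1_sig a) (proj1_sig b)) ->
    forall (o : option (img h)) c, option_map (@proj1_sig _ _) (obind (fun d => iop h f d c) o)
       = obind (fun d => f d (proj1_sig c)) (option_map (@proj1_sig _ _) o)).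
  { intros f V [d|] c; simpl; auto. }
  assert (OB2 : forall f, (forall a b, option_map (@proj1_sig _ _) (iop h f a b) = f (proj1_sig a) (proj1_sig b)) ->
    forall (o : option (img h)) a, option_map (@proj1_sig _ _) (obind (fun d => iop h f a d) o)
       = obind (fun d => f (proj1_sig a) d) (option_map (@proj1_sig _ _) o)).
  { intros f V [d|] c; simpl; auto. }
  unfold is_partial_lattice, s_idem, s_comm, s_assoc.
  repeat split; intros; apply omap_inj.
  - rewrite Vj. apply Ij.
  - rewrite Vm. apply Im.
  - rewrite !Vj. apply Cj.
  - rewrite !Vm. apply Cm.
  - rewrite (OB _ Vj), (OB2 _ Vj), !Vj. apply Aj.
  - rewrite (OB _ Vm), (OB2 _ Vm), !Vm. apply Am.
  - apply (f_equal (option_map (@proj1_sig _ _))) in H. rewrite Vj in H.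
    rewrite Vm. simpl in *. apply D1. exact H.
  - apply (f_equal (option_map (@proj1_sig _ _))) in H. rewrite Vm in H.
    rewrite Vj. simpl in *. apply D2. exact H.
Qed.

Lemma qjoin_char T1 T2 (j1 m1 : pop T1) (j2 m2 : pop T2) h :
  is_partial_lattice j1 m1 -> is_closed_hom j1 m1 j2 m2 h ->
  (inLs j1 m1 Top -> forall u, Theta j1 m1 (ker h) Top u -> u = Top) ->
  forall A B, qjoin j1 m1 (ker h) A B =
    match j1 (qrep A) (qrep B) with Some z => Some (qclass (ker h) z) | None => None end.
Proof. intros PL CH HT A B. unfold qjoin, qop.
  destruct (excluded_middle_informative _) as [Hex|Hn].
  - destruct (constructive_indefinite_description _ Hex) as [z [s [Hs Ht]]]. simpl.
    pose proof (sup_eq _ _ _ PL (Elt (qrep A)) (Elt (qrep B)) _ I I Hs) as Es. pose proof Hs as (Is&_).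
    simpl in Es. destruct (j1 (qrep A) (qrep B)) eqn:E; subst s.
    + f_equal. apply qclass_eq. apply (Theta_Hx _ _ _ _ _ _ _ PL CH) in Ht.
      simpl in Ht. congruence.
    + specialize (HT Is _ Ht). discriminate.
  - destruct (j1 (qrep A) (qrep B)) eqn:E; auto.
    exfalso. apply Hn. exists t, (Elt t). split.
    + pose proof (sup_is_EE _ _ _ PL (qrep A) (qrep B)) as S. simpl in S. rewrite E in S. exact S.
    + apply Theta_refl. exact I.
Qed.

Lemma qmeet_char T1 T2 (j1 m1 : pop T1) (j2 m2 : pop T2) h :
  is_partial_lattice j1 m1 -> is_closed_hom j1 m1 j2 m2 h ->
  (inLs j1 m1 Bot -> forall u, Theta j1 m1 (ker h) Bot u -> u = Bot) ->
  forall A B, qmeet j1 m1 (ker h) A B =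
    match m1 (qrep A) (qrep B) with Some z => Some (qclass (ker h) z) | None => None end.
Proof. intros PL CH HT A B. unfold qmeet, qop.
  destruct (excluded_middle_informative _) as [Hex|Hn].
  - destruct (constructive_indefinite_description _ Hex) as [z [s [Hs Ht]]]. simpl.
    pose proof (inf_eq _ _ _ PL (Elt (qrep A)) (Elt (qrep B)) _ I I Hs) as Es. pose proof Hs as (Is&_).
    simpl in Es. destruct (m1 (qrep A) (qrep B)) eqn:E; subst s.
    + f_equal. apply qclass_eq. apply (Theta_Hx _ _ _ _ _ _ _ PL CH) in Ht.
      simpl in Ht. congruence.
    + specialize (HT Is _ Ht). discriminate.
  - destruct (m1 (qrep A) (qrep B)) eqn:E; auto.
    exfalso. apply Hn. exists t, (Elt t). split.
    + pose proof (inf_is_EE _ _ _ PL (qrep A) (qrep B)) as S. simpl in S. rewrite E in S. exact S.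
    + apply Theta_refl. exact I.
Qed.

Definition pr {T1 T2} (h : T1 -> T2) (y : img h) : T1 :=
  proj1_sig (constructive_indefinite_description _ (proj2_sig y)).
Lemma pr_spec {T1 T2} (h : T1 -> T2) y : h (pr h y) = proj1_sig y.
Proof. unfold pr. destruct (constructive_indefinite_description _ _). simpl. auto. Qed.
Definition phi {T1 T2} (h : T1 -> T2) (y : img h) : qT (ker h) := qclass (ker h) (pr h y).
Lemma qrep_phi {T1 T2} (h : T1 -> T2) y : h (qrep (phi h y)) = proj1_sig y.
Proof. unfold phi. rewrite qrep_class. apply pr_spec. Qed.

Theorem mainTheorem8 (T1 T2 : Type) (j1 m1 : pop T1) (j2 m2 : pop T2)
  (h : T1 -> T2) :
  is_partial_lattice j1 m1 -> is_partial_lattice j2 m2 ->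
  is_closed_hom j1 m1 j2 m2 h ->
  is_con j1 m1 (ker h) /\
  ((inLs j1 m1 Bot -> forall u, Theta j1 m1 (ker h) Bot u -> u = Bot) ->
   (inLs j1 m1 Top -> forall u, Theta j1 m1 (ker h) Top u -> u = Top) ->
   (* the operations of L2 restricted to h(L1) take values in h(L1) *)
   (forall a b c, j2 (h a) (h b) = Some c -> exists x, h x = c) /\
   (forall a b c, m2 (h a) (h b) = Some c -> exists x, h x = c) /\
   is_partial_lattice (iop h j2) (iop h m2) /\
   exists phi : img h -> qT (ker h),
     (forall x (p : exists x', h x' = h x),
        phi (exist _ (h x) p) = qclass (ker h) x) /\
     is_iso (iop h j2) (iop h m2) (qjoin j1 m1 (ker h)) (qmeet j1 m1 (ker h)) phi).
Proof.
  intros PL1 PL2 CH. split; [exact (ker_con _ _ _ _ _ _ _ PL1 CH)|].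
  intros HB HT. pose proof CH as ((Hj&Hm)&Cj&Cm).
  assert (Clj : forall a b c, j2 (h a) (h b) = Some c -> exists x, h x = c).
  { intros a b c E. destruct (j1 a b) eqn:E1.
    - exists t. rewrite (Hj _ _ _ E1) in E. congruence.
    - exfalso; apply (Cj a b); congruence. }
  assert (Clm : forall a b c, m2 (h a) (h b) = Some c -> exists x, h x = c).
  { intros a b c E. destruct (m1 a b) eqn:E1.
    - exists t. rewrite (Hm _ _ _ E1) in E. congruence.
    - exfalso; apply (Cm a b); congruence. }
  split; [exact Clj|]. split; [exact Clm|].
  split; [exact (iop_pl _ _ h j2 m2 PL2 Clj Clm)|].
  pose proof (iop_val _ _ h j2 Clj) as Vj. pose proof (iop_val _ _ h m2 Clm) as Vm.
  exists (phi h). split.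
  { intros x p. unfold phi. apply qclass_eq. rewrite pr_spec. reflexivity. }
  split; [split|split; [split|split]].
  - intros y1 y2 E. apply sig_eq. rewrite <- (qrep_phi h y1), <- (qrep_phi h y2), E. reflexivity.
  - intros [P [x ->]]. exists (exist _ (h x) (ex_intro _ x eq_refl)). apply sig_eq. simpl.
    unfold phi, qclass, ker; simpl. rewrite pr_spec. reflexivity.
  - intros a b c E. rewrite (qjoin_char _ _ _ _ _ _ _ PL1 CH HT).
    apply (f_equal (option_map (@proj1_sig _ _))) in E. rewrite Vj in E. simpl in E.
    rewrite <- (qrep_phi h a), <- (qrep_phi h b) in E.
    destruct (j1 (qrep (phi h a)) (qrep (phi h b))) eqn:E1.
    + rewrite (Hj _ _ _ E1) in E. f_equal. unfold phi. apply qclass_eq.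
      rewrite pr_spec. congruence.
    + exfalso; apply (Cj (qrep (phi h a)) (qrep (phi h b))); congruence.
  - intros a b c E. rewrite (qmeet_char _ _ _ _ _ _ _ PL1 CH HB).
    apply (f_equal (option_map (@proj1_sig _ _))) in E. rewrite Vm in E. simpl in E.
    rewrite <- (qrep_phi h a), <- (qrep_phi h b) in E.
    destruct (m1 (qrep (phi h a)) (qrep (phi h b))) eqn:E1.
    + rewrite (Hm _ _ _ E1) in E. f_equal. unfold phi. apply qclass_eq.
      rewrite pr_spec. congruence.
    + exfalso; apply (Cm (qrep (phi h a)) (qrep (phi h b))); congruence.
  - intros a b H N. apply H. rewrite (qjoin_char _ _ _ _ _ _ _ PL1 CH HT).
    destruct (j1 (qrep (phi h a)) (qrep (phi h b))) eqn:E1; [|reflexivity].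
    exfalso. pose proof (Hj _ _ _ E1) as E2. rewrite !qrep_phi in E2.
    apply (f_equal (option_map (@proj1_sig _ _))) in N. rewrite Vj in N. simpl in N.
    congruence.
  - intros a b H N. apply H. rewrite (qmeet_char _ _ _ _ _ _ _ PL1 CH HB).
    destruct (m1 (qrep (phi h a)) (qrep (phi h b))) eqn:E1; [|reflexivity].
    exfalso. pose proof (Hm _ _ _ E1) as E2. rewrite !qrep_phi in E2.
    apply (f_equal (option_map (@proj1_sig _ _))) in N. rewrite Vm in N. simpl in N.
    congruence.
Qed.
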